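(* Consider an instance of the Weight Constrained Shortest Path Problem (directed graph $G=(S,E)$, edge costs $\mathit{cost}_1,\mathit{cost}_2\ge 0$, states $\mathit{start},\mathit{goal}\in S$, weight limit $W$) that admits at least one $\mathit{start}$-$\mathit{goal}$ path $\pi$ with $\mathit{cost}_2(\pi)\le W$. Then the algorithm WC-A* (described in the context) terminates, and the node $\mathit{Sol}$ it returns corresponds to a cost-optimal solution path, i.e. the path obtained by following parent pointers from $\mathit{Sol}$ back to $\mathit{start}$, followed by the path from $s(\mathit{Sol})$ to $\mathit{goal}$ realising $(h_1(s(\mathit{Sol})),ub_2(s(\mathit{Sol})))$, is a cost-optimal solution path.
   Context: A path is a sequence of states $u_1,\dots,u_n$ with $(u_i,u_{i+1})\in E$; $\mathit{cost}_p(\pi)=\sum_i \mathit{cost}_p(u_i,u_{i+1})$ for $p\in\{1,2\}$. A cost-optimal solution path is a $\mathit{start}$-$\mathit{goal}$ path $\pi^*$ with $\mathit{cost}_2(\pi^* )\le W$ whose pair $(\mathit{cost}_1,\mathit{cost}_2)$ is lexicographically smallest among all $\mathit{start}$-$\mathit{goal}$ paths with $\mathit{cost}_2\le W$. WC-A*, initialisation: set $\overline{f_2}=W$, $\overline{f_1}=\infty$. (i) Run a bounded A* search backward from $\mathit{goal}$ (on the reversed graph) on $\mathit{cost}_2$ with an admissible heuristic, breaking ties on $\mathit{cost}_1$; for every state $u$ it expands it records $h_2(u)$ = minimum $\mathit{cost}_2$ of a $u$-$\mathit{goal}$ path and $ub_1(u)$ = the $\mathit{cost}_1$ of a $u$-$\mathit{goal}$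 path that is lexicographically minimal in $(\mathit{cost}_2,\mathit{cost}_1)$; when $\mathit{start}$ is about to be expanded it sets $\overline{f_1}\leftarrow ub_1(\mathit{start})$; it stops before expanding a state whose $f_2$-estimate exceeds $\overline{f_2}$. (ii) Then run a bounded backward A* from $\mathit{goal}$ on $\mathit{cost}_1$ with an admissible heuristic, breaking ties on $\mathit{cost}_2$, using only states expanded in (i); for each state $u$ it expands it records $h_1(u)$ = minimum $\mathit{cost}_1$ of a $u$-$\mathit{goal}$ path and $ub_2(u)$ = the $\mathit{cost}_2$ of such a path lexicographically minimal in $(\mathit{cost}_1,\mathit{cost}_2)$; it stops before expanding a state with $f_1$-estimate exceeding $\overline{f_1}$. States not explored in these searches are ignored in what follows. WC-A*, constrained search: a node $x$ stores a state $s(x)$, $\mathbf g(x)=(g_1(x),g_2(x))$ (costs of the path from $\mathit{start}$ to $s(x)$ given by its parent pointers), $\mathbf f(x)=\mathbf g(x)+\mathbf h(s(x))$, and a parent. Initialise $g_{min}(u)=\infty$ for all $u$, $f^{sol}_2=\infty$, $\mathit{Sol}$ empty, and a priority queue $\mathit{Open}$ containing the node for $\mathit{start}$ with $\mathbf g=(0,0)$. While $\mathit{Open}\ne\emptyset$: remove from $\mathit{Open}$ a node $x$ with lexicographically smallest $(f_1,f_2)$; if $f_1(x)>\overline{f_1}$ stop; if $g_2(x)\ge g_{min}(s(x))$ discard $x$ and continue; set $g_{min}(s(x))\leftarrow g_2(x)$. (Early solution update) Let $u=s(x)$, $f_1'=g_1(x)+ub_1(u)$, $f_2'=g_2(x)+ub_2(u)$.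 If $f_2'\le\overline{f_2}$: if $f_1(x)<\overline{f_1}$ or $f_2'<f^{sol}_2$, set $\overline{f_1}\leftarrow f_1(x)$, $f^{sol}_2\leftarrow f_2'$, $\mathit{Sol}\leftarrow x$. Otherwise, if $f_1'<\overline{f_1}$, set $\overline{f_1}\leftarrow f_1'$ and $f^{sol}_2\leftarrow\infty$. If $h_1(u)=ub_1(u)$, continue without expanding. Otherwise, for every edge $(u,v)\in E$ create node $y$ with $s(y)=v$, $\mathbf g(y)=\mathbf g(x)+\mathbf{cost}(u,v)$, $\mathbf f(y)=\mathbf g(y)+\mathbf h(v)$, parent $x$; discard $y$ if $g_2(y)\ge g_{min}(v)$, or $f_1(y)>\overline{f_1}$, or $f_2(y)>\overline{f_2}$; otherwise insert $y$ into $\mathit{Open}$. When the loop ends, return $\mathit{Sol}$. *)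

(* Defs.v *)
From HB Require Import structures.
From mathcomp Require Import all_boot all_order all_algebra.
From mathcomp Require Import constructive_ereal.
Set Implicit Arguments. Unset Strict Implicit. Unset Printing Implicit Defensive.
Import Order.TTheory GRing.Theory Num.Theory.
Local Open Scope ring_scope.
Local Open Scope ereal_scope.

Section WCAstar.
Variables (R : realDomainType) (S : finType) (E : rel S) (c1 c2 : S -> S -> R).

Fixpoint pcost (c : S -> S -> R) (u : S) (p : seq S) : R :=
  match p with [::] => 0%R | v :: p' => (c u v + pcost c v p')%R end.

Definition gpath (A : {set S}) (u : S) (p : seq S) (t : S) : bool :=
  [&& path E u p, last u p == t & all (mem A) (u :: p)].

Definition lexle (a b : R * R) : bool :=
  ((a.1 < b.1)%R || ((a.1 == b.1) && (a.2 <= b.2)%R)).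

Definition cost_optimal (start goal : S) (W : R) (p : seq S) : Prop :=
  [/\ gpath setT start p goal, (pcost c2 start p <= W)%R &
      forall q, gpath setT start q goal -> (pcost c2 start q <= W)%R ->
        lexle (pcost c1 start p, pcost c2 start p)
              (pcost c1 start q, pcost c2 start q)].

(* Outcome of the two backward searches, given the heuristics hh2 (phase (i),
   estimating cost_2 from start) and hh1 (phase (ii), estimating cost_1 from
   start): explored sets X1, X2 and the recorded values h1 h2 ub1 ub2. *)
Definition init_outcome (start goal : S) (W : R) (hh2 hh1 : S -> R)
    (X1 X2 : {set S}) (h1 h2 ub1 ub2 : S -> R) : Prop :=
  [/\ (* phase (i): h2 u = min cost_2, ub1 u = cost_1 of a (cost2,cost1)-lexmin path *)
      (forall u, (exists p, gpath setT u p goal) ->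
        exists2 p, gpath setT u p goal &
          [/\ h2 u = pcost c2 u p, ub1 u = pcost c1 u p &
              forall q, gpath setT u q goal ->
                lexle (pcost c2 u p, pcost c1 u p) (pcost c2 u q, pcost c1 u q)]),
      (* states expanded in phase (i): f2-estimate within the bound W *)
      (forall u, u \in X1 <-> (exists p, gpath setT u p goal) /\ (h2 u + hh2 u <= W)%R),
      (* phase (ii), on the subgraph of states expanded in (i) *)
      (forall u, (exists p, gpath X1 u p goal) ->
        exists2 p, gpath X1 u p goal &
          [/\ h1 u = pcost c1 u p, ub2 u = pcost c2 u p &
              forall q, gpath X1 u q goal ->
                lexle (pcost c1 u p, pcost c2 u p) (pcost c1 u q, pcost c2 u q)]) &
      (* states expanded in phase (ii): f1-estimate within the bound f1bar
         set in phase (i) (ub1 start if start was expanded, else +oo) *)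
      (forall u, u \in X2 <-> [/\ u \in X1, (exists p, gpath X1 u p goal) &
          ((h1 u + hh1 u)%:E <= (if start \in X1 then (ub1 start)%:E else +oo))])].

(* A node is represented by the list x of states following start along its
   parent pointers: the path of the node is start :: x. *)
Record config := Config {
  cOpen : seq (seq S);
  cgmin : S -> \bar R;
  cf1b : \bar R;
  cfsol2 : \bar R;
  cSol : option (seq S);
  chalted : bool }.

Variables (start goal : S) (W : R) (X1 X2 : {set S}) (h1 h2 ub1 ub2 : S -> R).

Definition nstate (x : seq S) : S := last start x.
Definition ng1 (x : seq S) : R := pcost c1 start x.
Definition ng2 (x : seq S) : R := pcost c2 start x.
Definition nf1 (x : seq S) : R := (ng1 x + h1 (nstate x))%R.
Definition nf2 (x : seq S) : R := (ng2 x + h2 (nstate x))%R.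

Definition init_config : config :=
  Config [:: [::]] (fun _ => +oo)
         (if start \in X1 then (ub1 start)%:E else +oo) +oo None false.

Definition terminal (c : config) : bool := chalted c || nilp (cOpen c).

Definition early_update (x : seq S) (f1b fs : \bar R) (sol : option (seq S))
    : \bar R * \bar R * option (seq S) :=
  let u := nstate x in
  let f1' := (ng1 x + ub1 u)%R in
  let f2' := (ng2 x + ub2 u)%R in
  if (f2' <= W)%R then
    (if ((nf1 x)%:E < f1b) || (f2'%:E < fs) then ((nf1 x)%:E, f2'%:E, Some x)
     else (f1b, fs, sol))
  else if f1'%:E < f1b then (f1'%:E, +oo, sol) else (f1b, fs, sol).

Definition gmin_upd (gm : S -> \bar R) (x : seq S) : S -> \bar R :=
  fun w => if w == nstate x then (ng2 x)%:E else gm w.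

(* children of x that are inserted into Open (states not explored in the
   initialisation, i.e. outside X2, are ignored) *)
Definition children (gm : S -> \bar R) (f1b : \bar R) (x : seq S) : seq (seq S) :=
  [seq rcons x v | v <- enum S &
     [&& E (nstate x) v, v \in X2,
         (ng2 (rcons x v))%:E < gm v,
         (nf1 (rcons x v))%:E <= f1b &
         (nf2 (rcons x v) <= W)%R]].

(* One iteration of the while loop, removing node x from Open (any node with
   lexicographically smallest (f1,f2): ties are broken arbitrarily). *)
Inductive step : config -> config -> Prop :=
| step_stop : forall O gm f1b fs sol x,
    x \in O -> (forall y, y \in O -> lexle (nf1 x, nf2 x) (nf1 y, nf2 y)) ->
    f1b < (nf1 x)%:E ->
    step (Config O gm f1b fs sol false) (Config (rem x O) gm f1b fs sol true)
| step_discard : forall O gm f1b fs sol x,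
    x \in O -> (forall y, y \in O -> lexle (nf1 x, nf2 x) (nf1 y, nf2 y)) ->
    (nf1 x)%:E <= f1b ->
    gm (nstate x) <= (ng2 x)%:E ->
    step (Config O gm f1b fs sol false) (Config (rem x O) gm f1b fs sol false)
| step_process : forall O gm f1b fs sol x f1b' fs' sol',
    x \in O -> (forall y, y \in O -> lexle (nf1 x, nf2 x) (nf1 y, nf2 y)) ->
    (nf1 x)%:E <= f1b ->
    (ng2 x)%:E < gm (nstate x) ->
    early_update x f1b fs sol = (f1b', fs', sol') ->
    step (Config O gm f1b fs sol false)
         (Config (if h1 (nstate x) == ub1 (nstate x) then rem x O
                  else rem x O ++ children (gmin_upd gm x) f1b' x)
                 (gmin_upd gm x) f1b' fs' sol' false).

Inductive reachable : config -> Prop :=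
| reach_init : reachable init_config
| reach_step : forall c c', reachable c -> step c c' -> reachable c'.

End WCAstar.

(* Main.v *)
Require Import Defs.
From HB Require Import structures.
From mathcomp Require Import all_boot all_order all_algebra.
From mathcomp Require Import constructive_ereal.
From Stdlib Require Import Classical_Prop.
Import Order.TTheory GRing.Theory Num.Theory.
Local Open Scope ring_scope.
Set Implicit Arguments. Unset Strict Implicit. Unset Printing Implicit Defensive.

Section Gen.
Variables (R : realDomainType) (S : finType) (E : rel S).
Implicit Types (c : S -> S -> R) (u v w : S) (p q : seq S).

Lemma pcost_cat c u p q : pcost c u (p ++ q) = pcost c u p + pcost c (last u p) q.
Proof. by elim: p u => [|v p IH] u /=; rewrite ?add0r // IH addrA. Qed.

Lemma pcost_rcons c u p v : pcost c u (rcons p v) = pcost c u p + c (last u p) v.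
Proof. by rewrite -cats1 pcost_cat /= addr0. Qed.

Lemma pcost_ge0 c : (forall u v, E u v -> 0 <= c u v) ->
  forall u p, path E u p -> 0 <= pcost c u p.
Proof.
move=> Hc u p; elim: p u => [|v p IH] u //= /andP[Huv Hp].
by rewrite addr_ge0 // ?Hc // IH.
Qed.

Lemma gpathP A u p t :
  gpath E A u p t <-> [/\ path E u p, last u p = t & all (mem A) (u :: p)].
Proof.
rewrite /gpath; split.
  by case/and3P=> H1 /eqP H2 H3.
by case=> H1 H2 H3; rewrite H1 H2 eqxx H3.
Qed.

Lemma gpath_cat A u p q t :
  gpath E A u (p ++ q) t <-> gpath E A u p (last u p) /\ gpath E A (last u p) q t.
Proof.
rewrite !gpathP cat_path last_cat -cat_cons all_cat; split.
  case=> /andP[H1 H2] H3 /andP[H5 H6].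
  split; split => //=.
  have Hl : last u p \in A by apply: (allP H5); apply: mem_last.
  by rewrite Hl H6.
case=> [[H1 _ H3] [H4 H5 /= /andP[_ H6]]]; split => //; first by rewrite H1 H4.
by move: H3 => /= ->; rewrite H6.
Qed.

Lemma gpath_nil A u t : gpath E A u [::] t <-> u = t /\ u \in A.
Proof. rewrite gpathP /= andbT; split; [by case | by case]. Qed.

Lemma gpath_cons A u v p t :
  gpath E A u (v :: p) t <-> [/\ E u v, u \in A & gpath E A v p t].
Proof.
rewrite gpathP /=; split.
  case=> /andP[H1 H2] H3 /andP[H4 /andP[H5 H6]]; split => //.
  by apply/gpathP; split => //=; rewrite H5 H6.
case=> H1 H2 /gpathP[H3 H4 /= /andP[H5 H6]].
by split; rewrite ?H1 ?H2 ?H3 ?H5 ?H6.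
Qed.

Lemma gpath_sub (A B : {set S}) u p t : {subset A <= B} -> gpath E A u p t -> gpath E B u p t.
Proof.
move=> sAB; rewrite !gpathP => -[H1 H2 H3]; split => //.
by apply/allP => x /(allP H3); apply: sAB.
Qed.

Lemma gpathT u p t : gpath E setT u p t <-> path E u p /\ last u p = t.
Proof.
rewrite gpathP; split; first by case.
by case=> H1 H2; split => //; apply/allP => x _; rewrite /= inE.
Qed.

Lemma split_at w u p : w \in u :: p ->
  exists p1 p2, p = p1 ++ p2 /\ last u p1 = w.
Proof.
rewrite in_cons => /orP[/eqP ->|]; first by exists [::], p.
case/splitPr => p1 p2; exists (rcons p1 w), p2.
by rewrite cat_rcons last_rcons.
Qed.

Lemma in_take_state w u p : w \in u :: p ->
  exists2 i, (i <= size p)%N & last u (take i p) = w.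
Proof.
elim: p u => [|a p IH] u.
  by rewrite mem_seq1 => /eqP ->; exists 0.
rewrite in_cons => /orP[/eqP ->|/IH [i Hi Hl]]; first by exists 0.
by exists i.+1.
Qed.

Lemma lexle_refl (a : R * R) : lexle a a.
Proof. by rewrite /lexle eqxx lexx orbT. Qed.

Lemma lexle_fst (a b : R * R) : lexle a b -> a.1 <= b.1.
Proof. by case/orP=> [/ltW|/andP[/eqP -> _]]. Qed.

Lemma lexle_snd (a b : R * R) : lexle a b -> a.1 = b.1 -> a.2 <= b.2.
Proof. by case/orP=> [H E1|/andP[_ ->]] //; move: H; rewrite E1 ltxx. Qed.

Lemma lexleI (a b : R * R) : a.1 <= b.1 -> (a.1 = b.1 -> a.2 <= b.2) -> lexle a b.
Proof.
rewrite /lexle le_eqVlt => /orP[/eqP H1 H2|->] //.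
by rewrite (H2 H1) H1 eqxx orbT.
Qed.

Lemma lexle_trans (a b d : R * R) : lexle a b -> lexle b d -> lexle a d.
Proof.
move=> Hab Hbd; apply: lexleI; first exact: le_trans (lexle_fst Hab) (lexle_fst Hbd).
move=> Had; have Hab1 := lexle_fst Hab; have Hbd1 := lexle_fst Hbd.
have Eab : a.1 = b.1 by apply/eqP; rewrite eq_le Hab1 Had.
have Ebd : b.1 = d.1 by rewrite -Had Eab.
exact: le_trans (lexle_snd Hab Eab) (lexle_snd Hbd Ebd).
Qed.

Lemma lexle_total (a b : R * R) : lexle a b \/ lexle b a.
Proof.
case: (ltgtP a.1 b.1) => H.
- by left; rewrite /lexle H.
- by right; rewrite /lexle H.
- case: (leP a.2 b.2) => H2.
    by left; rewrite /lexle H eqxx H2 orbT.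
  by right; rewrite /lexle H eqxx (ltW H2) orbT.
Qed.

Lemma exists_lexmin (T : eqType) (k : T -> R * R) (s : seq T) : s != [::] ->
  exists2 x, x \in s & forall y, y \in s -> lexle (k x) (k y).
Proof.
elim: s => [|a s IH] _ //.
case: s IH => [|b s] IH.
  by exists a => [|y]; rewrite ?mem_seq1 // => /eqP ->; apply: lexle_refl.
case: IH => // x Hx Hmin.
case: (lexle_total (k a) (k x)) => H.
  exists a; first exact: mem_head.
  move=> y; rewrite in_cons => /orP[/eqP ->|Hy]; first exact: lexle_refl.
  exact: lexle_trans H (Hmin y Hy).
exists x; first by rewrite in_cons Hx orbT.
move=> y; rewrite in_cons => /orP[/eqP ->|Hy] //; exact: Hmin.
Qed.

Fixpoint allseq (n : nat) : seq (seq S) :=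
  if n is n'.+1 then [::] :: [seq v :: s | v <- enum S, s <- allseq n']
  else [:: [::]].

Lemma mem_allseq n s : (size s <= n)%N -> s \in allseq n.
Proof.
elim: n s => [|n IH] [|v s] //=; rewrite ?mem_head // ltnS => Hs.
rewrite in_cons; apply/orP; right.
by apply: (allpairs_f (fun v s => v :: s)); rewrite ?mem_enum // IH.
Qed.

Lemma uniq_size u p : uniq (u :: p) -> (size p < #|S|)%N.
Proof.
move=> /card_uniqP H; have := max_card (mem (u :: p)).
by rewrite H.
Qed.

End Gen.

Section Main.
Variables (R : realDomainType) (S : finType) (E : rel S)
    (c1 c2 : S -> S -> R) (start goal : S) (W : R).
Hypothesis Hc1 : forall u v, E u v -> 0 <= c1 u v.
Hypothesis Hc2 : forall u v, E u v -> 0 <= c2 u v.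
Hypothesis Hfeas : exists p, gpath E setT start p goal /\ pcost c2 start p <= W.
Variables (hh2 hh1 : S -> R).
Hypothesis Hhh2_adm : forall u p, gpath E setT start p u -> hh2 u <= pcost c2 start p.
Variables (X1 X2 : {set S}) (h1 h2 ub1 ub2 : S -> R).
Hypothesis Hhh1_adm : forall u p, gpath E X1 start p u -> hh1 u <= pcost c1 start p.
Hypothesis Hinit : init_outcome E c1 c2 start goal W hh2 hh1 X1 X2 h1 h2 ub1 ub2.

Local Notation pc := pcost.

Lemma p2_ex u p0 : gpath E setT u p0 goal -> exists2 p, gpath E setT u p goal &
  [/\ h2 u = pc c2 u p, ub1 u = pc c1 u p &
      forall q, gpath E setT u q goal -> lexle (pc c2 u p, pc c1 u p) (pc c2 u q, pc c1 u q)].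
Proof. by move=> Hp0; case: Hinit => H _ _ _; apply: H; exists p0. Qed.

Lemma p1_ex u p0 : gpath E X1 u p0 goal -> exists2 p, gpath E X1 u p goal &
  [/\ h1 u = pc c1 u p, ub2 u = pc c2 u p &
      forall q, gpath E X1 u q goal -> lexle (pc c1 u p, pc c2 u p) (pc c1 u q, pc c2 u q)].
Proof. by move=> Hp0; case: Hinit => _ _ H _; apply: H; exists p0. Qed.

Lemma h2_le u q : gpath E setT u q goal -> h2 u <= pc c2 u q.
Proof. by move=> Hq; case: (p2_ex Hq) => p _ [-> _ H]; exact: lexle_fst (H q Hq). Qed.

Lemma h1_le u q : gpath E X1 u q goal -> h1 u <= pc c1 u q.
Proof. by move=> Hq; case: (p1_ex Hq) => p _ [-> _ H]; exact: lexle_fst (H q Hq). Qed.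

Lemma ub2_le u q : gpath E X1 u q goal -> pc c1 u q = h1 u -> ub2 u <= pc c2 u q.
Proof.
move=> Hq Hc; case: (p1_ex Hq) => p _ [Eh -> H].
by apply: (lexle_snd (H q Hq)) => /=; rewrite Hc Eh.
Qed.

Lemma inX1 u : u \in X1 <-> (exists p, gpath E setT u p goal) /\ h2 u + hh2 u <= W.
Proof. by case: Hinit => _ H _ _; apply: H. Qed.

Lemma inX2 u : u \in X2 <-> [/\ u \in X1, (exists p, gpath E X1 u p goal) &
          ((h1 u + hh1 u)%:E <= (if start \in X1 then (ub1 start)%:E else +oo))%E].
Proof. by case: Hinit => _ _ _ H; apply: H. Qed.

Lemma X2_X1 : {subset X2 <= X1}.
Proof. by move=> u /inX2 []. Qed.

Lemma gpath_restrict (A : {set S}) u p t :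
  gpath E setT u p t -> all (mem A) (u :: p) -> gpath E A u p t.
Proof. by move=> /gpathT [H1 H2] H3; apply/gpathP. Qed.

Lemma all_X1 p : gpath E setT start p goal -> pc c2 start p <= W ->
  all (mem X1) (start :: p).
Proof.
move=> Hg HW; apply/allP => w Hw.
case: (split_at Hw) => p1 [p2 [Ep Hl]]; subst p.
case/gpath_cat: Hg; rewrite Hl => Hg1 Hg2.
apply/inX1; split; first by exists p2.
have := Hhh2_adm Hg1; have := h2_le Hg2.
move: HW; rewrite pcost_cat Hl => HW H1 H2.
by apply: le_trans HW; rewrite addrC lerD.
Qed.

Lemma all_X2 p : gpath E setT start p goal -> pc c2 start p <= W ->
  pc c1 start p <= ub1 start -> all (mem X2) (start :: p).
Proof.
move=> Hg HW H1; have HX := all_X1 Hg HW.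
have Hs : start \in X1 by move: HX => /= /andP[].
apply/allP => w Hw.
case: (split_at Hw) => p1 [p2 [Ep Hl]]; subst p.
move: HX; rewrite -cat_cons all_cat => /andP[HXa HXb].
case/gpath_cat: Hg; rewrite Hl => Hg1 Hg2.
have Hw1 : w \in X1 by rewrite -Hl; apply: (allP HXa); apply: mem_last.
have G1 : gpath E X1 start p1 w by apply: gpath_restrict.
have G2 : gpath E X1 w p2 goal by apply: gpath_restrict => //=; rewrite Hw1 HXb.
apply/inX2; split => //; first by exists p2.
rewrite Hs lee_fin; have := Hhh1_adm G1; have := h1_le G2.
move: H1; rewrite pcost_cat Hl => H1 Ha Hb.
by apply: le_trans H1; rewrite addrC lerD.
Qed.

Lemma pfeas_facts : exists p0, [/\ gpath E setT start p0 goal, pc c2 start p0 <= W,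
  pc c1 start p0 = ub1 start & pc c2 start p0 = h2 start].
Proof.
case: Hfeas => pf [Hg HW].
case: (p2_ex Hg) => p Hp [E2 E1 _]; exists p; split => //.
by rewrite -E2; apply: le_trans HW; apply: h2_le.
Qed.

Lemma start_X1 : start \in X1.
Proof. by case: pfeas_facts => p [Hg HW _ _]; move: (all_X1 Hg HW) => /andP[]. Qed.

Lemma start_X2 : start \in X2.
Proof.
case: pfeas_facts => p [Hg HW H1 _].
have H1' : pc c1 start p <= ub1 start by rewrite H1.
by move: (all_X2 Hg HW H1') => /andP[].
Qed.


Lemma shorten u p t : path E u p -> last u p = t -> exists q,
  [/\ path E u q, last u q = t, uniq (u :: q), pc c1 u q <= pc c1 u p
    & pc c2 u q <= pc c2 u p].
Proof.
elim: p u => [|v p IH] u.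
  by move=> _ Ht; exists [::]; split.
move=> /= /andP[Huv Hp] Ht.
case: (IH v Hp Ht) => q [Hq Hqt Huq Hq1 Hq2].
case Hu: (u \in v :: q); last first.
  exists (v :: q); split.
  - by rewrite /= Huv Hq.
  - by [].
  - by apply/andP; split; [rewrite Hu | exact: Huq].
  - by rewrite /= lerD2l.
  - by rewrite /= lerD2l.
have Hs : path E u (v :: q) by rewrite /= Huv.
have Hsl : last u (v :: q) = t by [].
have Hsu : uniq (v :: q) := Huq.
have Hc : forall c : S -> S -> R, (forall a b, E a b -> 0 <= c a b) ->
   pc c v q <= pc c v p -> forall A B, v :: q = A ++ u :: B ->
   pc c u B <= pc c u (v :: p).
  move=> c Hc Hle0 A B EAB.
  have Hle : pc c u (v :: q) <= pc c u (v :: p) by rewrite /= lerD2l.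
  apply: (le_trans _ Hle); rewrite EAB pcost_cat /=.
  move: Hs; rewrite EAB cat_path /= => /andP[HA /andP[Hl _]].
  by rewrite addrA lerDr addr_ge0 // ?Hc // (pcost_ge0 Hc HA).
have [A [B EAB]] : exists A B, v :: q = A ++ u :: B.
  by case/splitPr: Hu => A B; exists A, B.
exists B; split.
- by move: Hs; rewrite EAB cat_path /= => /andP[_ /andP[]].
- by rewrite -Hsl EAB last_cat.
- by move: Hsu; rewrite EAB cat_uniq => /and3P[].
- exact: Hc c1 Hc1 Hq1 A B EAB.
- exact: Hc c2 Hc2 Hq2 A B EAB.
Qed.

Lemma opt_exists : exists ps, [/\ gpath E setT start ps goal, pc c2 start ps <= W &
  forall q, gpath E setT start q goal -> pc c2 start q <= W ->
    lexle (pc c1 start ps, pc c2 start ps) (pc c1 start q, pc c2 start q)].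
Proof.
pose F := [seq y <- allseq S #|S| | gpath E setT start y goal && (pc c2 start y <= W)].
have HF : forall q, gpath E setT start q goal -> pc c2 start q <= W ->
    exists2 q', q' \in F & pc c1 start q' <= pc c1 start q /\ pc c2 start q' <= pc c2 start q.
  move=> q /gpathT [Hq Hl] HW.
  case: (shorten Hq Hl) => q' [Hq' Hl' Hu H1 H2]; exists q' => //.
  rewrite mem_filter mem_allseq ?(ltnW (uniq_size Hu)) // andbT.
  have -> : gpath E setT start q' goal by apply/gpathT.
  exact: le_trans H2 HW.
have : F != [::].
  case: Hfeas => q [Hq HW]; case: (HF q Hq HW) => q' Hq' _.
  by apply/eqP => EF; rewrite EF in Hq'.
case/(exists_lexmin (fun y => (pc c1 start y, pc c2 start y))) => ps.
rewrite mem_filter => /andP[/andP[Hps HW] _] Hmin.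
exists ps; split => // q Hq HWq.
case: (HF q Hq HWq) => q' Hq' [H1 H2].
apply: lexle_trans (Hmin q' Hq') _.
apply: lexleI => //= E1.
Qed.


Section Opt.
Variable ps : seq S.
Hypothesis Hps : gpath E setT start ps goal.
Hypothesis HpsW : pc c2 start ps <= W.
Hypothesis Hpsopt : forall q, gpath E setT start q goal -> pc c2 start q <= W ->
    lexle (pc c1 start ps, pc c2 start ps) (pc c1 start q, pc c2 start q).

Local Notation astar := (pc c1 start ps).
Local Notation bstar := (pc c2 start ps).
Local Notation st := (nstate start).
Local Notation g1 := (ng1 c1 start).
Local Notation g2 := (ng2 c2 start).
Local Notation f1 := (nf1 c1 start h1).
Local Notation f2 := (nf2 c2 start h2).
Local Notation f2p y := (g2 y + ub2 (st y)).
Local Notation cfg := (config R S).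

Lemma astar_ub1 : astar <= ub1 start.
Proof.
case: pfeas_facts => p [Hg HW H1 _].
by rewrite -H1; exact: lexle_fst (Hpsopt Hg HW).
Qed.

Lemma bstar_W : bstar <= W. Proof. exact: HpsW. Qed.

Lemma feas_astar q : gpath E setT start q goal -> pc c2 start q <= W -> astar <= pc c1 start q.
Proof. by move=> Hg HW; exact: lexle_fst (Hpsopt Hg HW). Qed.

Definition goodw (y r : seq S) : Prop :=
  [/\ path E start y, gpath E setT (st y) r goal,
      g1 y + pc c1 (st y) r <= astar & g2 y + pc c2 (st y) r <= bstar].

Definition live (c : cfg) (y : seq S) : bool := ((g2 y)%:E < cgmin c (st y))%E.

Definition Acond (c : cfg) : Prop := exists s,
  [/\ cSol c = Some s, path E start s, f2p s <= W & lexle (f1 s, f2p s) (astar, bstar)].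

Definition SI (c : cfg) : Prop :=
  (cSol c = None /\ cfsol2 c = +oo%E) \/ exists s,
  [/\ cSol c = Some s, path E start s, f2p s <= W &
      (cf1b c = (f1 s)%:E /\ cfsol2 c = (f2p s)%:E) \/
      (cfsol2 c = +oo%E /\ (cf1b c < (f1 s)%:E)%E)].

Definition F1B (c : cfg) : Prop := exists2 t, cf1b c = t%:E & astar <= t.

Definition OI (c : cfg) : Prop := forall y, y \in cOpen c ->
  [/\ path E start y, st y \in X2, f2 y <= W, uniq (start :: y) &
      forall i, (i < size y)%N -> (cgmin c (st (take i y)) <= (g2 (take i y))%:E)%E].

Definition HI (c : cfg) (H : seq (seq S)) : Prop :=
  [/\ forall v, cgmin c v = +oo%E \/
         exists2 z, z \in H & st z = v /\ cgmin c v = (g2 z)%:E,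
      forall z, z \in H -> path E start z,
      forall z w, z \in H -> w \in cOpen c -> f1 z <= f1 w &
      ~ Acond c -> forall z r, z \in H -> goodw z r ->
        exists w r', [/\ w \in cOpen c, live c w, goodw w r' & (size r' < size r)%N]].

Definition BI (c : cfg) : Prop :=
  ~ Acond c -> exists w r, [/\ w \in cOpen c, live c w & goodw w r].

Definition Inv (c : cfg) : Prop :=
  [/\ SI c, F1B c, OI c, (exists H, HI c H) & (BI c /\ (chalted c -> Acond c))].

Lemma good_X2 y r : goodw y r -> all (mem X2) (start :: y ++ r).
Proof.
case=> Hy Hr H1 H2.
have Hg : gpath E setT start (y ++ r) goal by apply/gpath_cat; split => //; apply/gpathT.
apply: all_X2 => //.
  by rewrite pcost_cat; apply: le_trans H2 bstar_W.
by rewrite pcost_cat; apply: le_trans H1 astar_ub1.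
Qed.

Lemma good_X1path y r : goodw y r -> gpath E X1 (st y) r goal.
Proof.
move=> G; have HX := good_X2 G; case: G => Hy Hr _ _.
apply: gpath_restrict => //; apply/allP => w Hw; apply: X2_X1; apply: (allP HX).
move: Hw; rewrite in_cons => /orP[/eqP ->|Hw].
  by rewrite -cat_cons mem_cat mem_last.
by rewrite -cat_cons mem_cat Hw orbT.
Qed.


Lemma good_f1 y r : goodw y r -> f1 y <= astar.
Proof.
move=> G; have := h1_le (good_X1path G); case: G => _ _ H1 _ Hh.
by apply: le_trans H1; rewrite /nf1 lerD2l.
Qed.

Lemma h1_ge0 u : u \in X2 -> 0 <= h1 u.
Proof.
case/inX2 => _ [p0 Hp0] _; case: (p1_ex Hp0) => p /gpathP [Hp _ _] [-> _ _].
exact: pcost_ge0 Hc1 _ _ Hp.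
Qed.

Lemma h1_cons u v : u \in X1 -> v \in X2 -> E u v -> h1 u <= c1 u v + h1 v.
Proof.
move=> Hu /inX2 [_ [p0 Hp0] _] Huv; case: (p1_ex Hp0) => p Hp [-> _ _].
have : gpath E X1 u (v :: p) goal by apply/gpath_cons.
by move/h1_le.
Qed.

Lemma st_rcons x v : st (rcons x v) = v.
Proof. by rewrite /nstate last_rcons. Qed.

Lemma g1_rcons x v : g1 (rcons x v) = g1 x + c1 (st x) v.
Proof. by rewrite /ng1 pcost_rcons. Qed.

Lemma g2_rcons x v : g2 (rcons x v) = g2 x + c2 (st x) v.
Proof. by rewrite /ng2 pcost_rcons. Qed.

Lemma child_f1 x v : st x \in X1 -> v \in X2 -> E (st x) v -> f1 x <= f1 (rcons x v).
Proof.
move=> Hu Hv Huv; rewrite /nf1 -/(g1 x) -/(g1 (rcons x v)) g1_rcons st_rcons -addrA lerD2l.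
exact: h1_cons.
Qed.

Lemma gminE gm x w : gmin_upd c2 start gm x w = if w == st x then (g2 x)%:E else gm w.
Proof. by []. Qed.

Lemma inv_init : Inv (init_config start X1 ub1).
Proof.
rewrite /init_config start_X1; split => /=.
- by left.
- by exists (ub1 start) => //; exact: astar_ub1.
- move=> y; rewrite mem_seq1 => /eqP -> /=; split => //.
  + exact: start_X2.
  + by rewrite /nf2 /ng2 /= add0r; apply: le_trans (h2_le Hps) HpsW.
- exists [::]; split => //; by left.
- split => // _; exists [::], ps; split => //.
  + by rewrite /live /= ltey.
  + by split => //; rewrite /ng1 /ng2 /= add0r.
Qed.


Lemma no_stop (c : cfg) x : Inv c -> x \in cOpen c ->
  (forall y, y \in cOpen c -> lexle (f1 x, f2 x) (f1 y, f2 y)) ->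
  (cf1b c < (f1 x)%:E)%E -> Acond c.
Proof.
case=> _ [t Ht Hat] _ _ [HB _] Hx Hmin Hlt; apply: NNPP => nA.
case: (HB nA) => w [r [Hw _ G]].
have := lexle_fst (Hmin w Hw) => /= Hxw.
have := good_f1 G => Hwa.
move: Hlt; rewrite Ht lte_fin => Hlt.
have := le_lt_trans (le_trans Hxw (le_trans Hwa Hat)) Hlt.
by rewrite ltxx.
Qed.

Lemma inv_stop O gm f1b fs sol x :
  Inv (Config O gm f1b fs sol false) -> x \in O ->
  (forall y, y \in O -> lexle (f1 x, f2 x) (f1 y, f2 y)) ->
  (f1b < (f1 x)%:E)%E ->
  Inv (Config (rem x O) gm f1b fs sol true).
Proof.
move=> I Hx Hmin Hlt.
have HA := no_stop I Hx Hmin Hlt.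
case: I => HS HF HO [H [H1 H2 H3 H4]] _.
split => //.
- by move=> y /mem_rem Hy; apply: HO.
- exists H; split => // z w Hz /mem_rem Hw; exact: H3.
- by split.
Qed.

Lemma inv_discard O gm f1b fs sol x :
  Inv (Config O gm f1b fs sol false) -> x \in O ->
  (gm (st x) <= (g2 x)%:E)%E ->
  Inv (Config (rem x O) gm f1b fs sol false).
Proof.
move=> [HS HF HO [H [H1 H2 H3 H4]] [HB _]] Hx Hle.
have Hxl : ~~ live (Config O gm f1b fs sol false) x by rewrite /live /= -leNgt.
have Tr : forall w, w \in O -> live (Config O gm f1b fs sol false) w -> w \in rem x O.
  move=> w Hw Hl; apply: rem_mem => //; apply/eqP => Ewx.
  by move: Hxl; rewrite -Ewx Hl.
split => //.
- by move=> y /mem_rem Hy; apply: HO.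
- exists H; split => //.
  + by move=> z w Hz /mem_rem Hw; exact: H3.
  + move=> nA z r Hz G; case: (H4 nA z r Hz G) => w [r' [Hw Hl G' Hs]].
    by exists w, r'; split => //; apply: Tr.
- split => // nA; case: (HB nA) => w [r [Hw Hl G]].
  by exists w, r; split => //; apply: Tr.
Qed.


Lemma path_cat_goal y p : path E start y -> gpath E setT (st y) p goal ->
  gpath E setT start (y ++ p) goal.
Proof. by move=> Hy Hp; apply/gpath_cat; split => //; apply/gpathT. Qed.

Lemma X2_p1 u : u \in X2 -> exists2 p, gpath E X1 u p goal &
  h1 u = pc c1 u p /\ ub2 u = pc c2 u p.
Proof. by case/inX2 => _ [p0 Hp0] _; case: (p1_ex Hp0) => p Hp [? ? _]; exists p. Qed.

Lemma X2_p2 u : u \in X2 -> exists2 p, gpath E setT u p goal &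
  h2 u = pc c2 u p /\ ub1 u = pc c1 u p.
Proof.
case/inX2 => _ [p0 Hp0] _; have Hp0' : gpath E setT u p0 goal by apply: gpath_sub Hp0 => w _; rewrite inE.
by case: (p2_ex Hp0') => p Hp [? ? _]; exists p.
Qed.

Section Proc.
Variables (O : seq (seq S)) (gm : S -> \bar R) (f1b fs : \bar R)
  (sol : option (seq S)) (x : seq S) (f1b' fs' : \bar R) (sol' : option (seq S)).
Local Notation c := (Config O gm f1b fs sol false).
Hypothesis I : Inv c.
Hypothesis Hx : x \in O.
Hypothesis Hmin : forall y, y \in O -> lexle (f1 x, f2 x) (f1 y, f2 y).
Hypothesis Hf1 : ((f1 x)%:E <= f1b)%E.
Hypothesis Hg : ((g2 x)%:E < gm (st x))%E.
Hypothesis Heu : early_update c1 c2 start W h1 ub1 ub2 x f1b fs sol = (f1b', fs', sol').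
Local Notation gm' := (gmin_upd c2 start gm x).
Local Notation O' := (if h1 (st x) == ub1 (st x) then rem x O
   else rem x O ++ children E c1 c2 start W X2 h1 h2 gm' f1b' x).
Local Notation c' := (Config O' gm' f1b' fs' sol' false).

Lemma xOI : [/\ path E start x, st x \in X2, f2 x <= W, uniq (start :: x) &
      forall i, (i < size x)%N -> (gm (st (take i x)) <= (g2 (take i x))%:E)%E].
Proof. by case: I => _ _ HO _ _; apply: HO. Qed.

Lemma P_SI : SI c'.
Proof.
case: I => HS _ _ _ _; case: xOI => Hpx _ _ _ _; rewrite /SI /= in HS.
move: Heu; rewrite /early_update.
case: ifP => HW.
  case: ifP => Hc [<- <- <-]; last by [].
  by right; exists x; split => //; left.
case: ifP => Hc [<- <- <-] //.
case: HS => [[-> _]|[s [Hs Hps' Hsw Hs2]]]; first by left.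
right; exists s; split => //; right; split => //.
case: Hs2 => [[/= Ef _]|[_ /= Hlt]]; first by rewrite -Ef.
exact: lt_trans Hc Hlt.
Qed.


Lemma P_F1B : F1B c'.
Proof.
case: I => _ [t /= Ht Hat] _ _ _; case: xOI => Hpx HuX2 Hf2 _ _.
move: Heu; rewrite /early_update.
case: ifP => HW.
  case: ifP => Hc [<- _ _]; last by exists t.
  exists (f1 x) => //.
  case: (X2_p1 HuX2) => p Hp [Eh Eu].
  have Hp' : gpath E setT (st x) p goal by apply: gpath_sub Hp => w _; rewrite inE.
  have := feas_astar (path_cat_goal Hpx Hp').
  rewrite !pcost_cat -/(nstate start x) -Eh -Eu; apply.
  exact: HW.
case: ifP => Hc [<- _ _]; last by exists t.
exists (g1 x + ub1 (st x)) => //.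
case: (X2_p2 HuX2) => p Hp [Eh Eu].
have := feas_astar (path_cat_goal Hpx Hp).
rewrite !pcost_cat -/(nstate start x) -Eh -Eu; apply.
exact: Hf2.
Qed.

Lemma P_Amono : Acond c -> Acond c'.
Proof.
case: I => HS _ _ _ _; rewrite /SI /= in HS.
case=> s [/= Hs Hps' HsW Hlex].
move: Heu; rewrite /early_update.
have Keep : sol' = sol -> Acond c' by move=> Es; exists s; rewrite /= Es.
case: ifP => HW; last by case: ifP => _ [_ _ Es]; apply: Keep.
case: ifP => Hc [_ _ Es]; last by apply: Keep.
case: xOI => Hpx _ _ _ _.
exists x; split => //; apply: (lexle_trans _ Hlex).
case: HS => [[Hn _]|[s' [Hs' _ _ Hcase]]]; first by rewrite Hs in Hn.
move: Hs'; rewrite Hs => -[Ess]; subst s'.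
case: Hcase => [[Ef Efs]|[Efs Hlt]].
- move: Hc; rewrite Ef Efs !lte_fin => /orP[Hlt|Hlt].
    by apply: lexleI => /= [|Eq]; [exact: ltW | move: Hlt; rewrite Eq ltxx].
  move: Hf1; rewrite Ef lee_fin => Hle.
  by apply: lexleI => //= _; exact: ltW.
- have := le_lt_trans Hf1 Hlt; rewrite lte_fin => Hlt'.
  by apply: lexleI => /= [|Eq]; [exact: ltW | move: Hlt'; rewrite Eq ltxx].
Qed.

Lemma P_Asol : f2p x <= W -> lexle (f1 x, f2p x) (astar, bstar) -> Acond c'.
Proof.
move=> HW Hlex.
case: I => HS _ _ _ _; rewrite /SI /= in HS.
case: xOI => Hpx _ _ _ _.
move: Heu; rewrite /early_update HW.
case: ifP => Hc [Ef1 Efs Es].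
  by exists x; rewrite /= -Es.
case: HS => [[Hn Hfs]|[s [Hs Hps' HsW Hcase]]].
  by move: Hc; rewrite Hfs ltey orbT.
case: Hcase => [[Ef Efs']|[Efs' _]]; last by move: Hc; rewrite Efs' ltey orbT.
exists s; split => //; first by rewrite /= -Es.
apply: (lexle_trans _ Hlex).
move: Hc; rewrite Ef Efs' !lte_fin => /norP[H1 H2].
move: Hf1; rewrite Ef lee_fin => H3.
have Eq : f1 s = f1 x by apply/eqP; rewrite eq_le H3 leNgt H1.
by apply: lexleI => /= [|_]; [rewrite Eq | rewrite leNgt].
Qed.


Lemma gm'_le w : (gm' w <= gm w)%E.
Proof. by rewrite gminE; case: eqP => [->|_] //; exact: ltW Hg. Qed.

Lemma gm'_x : gm' (st x) = (g2 x)%:E.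
Proof. by rewrite gminE eqxx. Qed.

Lemma mem_children w :
  w \in children E c1 c2 start W X2 h1 h2 gm' f1b' x <->
  exists v, w = rcons x v /\ [&& E (st x) v, v \in X2,
         ((g2 (rcons x v))%:E < gm' v)%E, ((f1 (rcons x v))%:E <= f1b')%E &
         (f2 (rcons x v) <= W)].
Proof.
rewrite /children; split.
  by case/mapP => v; rewrite mem_filter => /andP[Hv _] ->; exists v.
case=> v [-> Hv]; apply: map_f; by rewrite mem_filter Hv mem_enum.
Qed.

Lemma g2_take y i : path E start y -> g2 (take i y) <= g2 y.
Proof.
move=> Hy; rewrite /ng2 -{2}(cat_take_drop i y) pcost_cat lerDl.
move: Hy; rewrite -{1}(cat_take_drop i y) cat_path => /andP[_ H].
exact: pcost_ge0 Hc2 _ _ H.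
Qed.

Lemma P_OI : OI c'.
Proof.
case: I => _ _ HO _ _; case: xOI => Hpx HuX2 Hf2 Hux Hpre.
have Hrem : forall y, y \in rem x O -> 
  [/\ path E start y, st y \in X2, f2 y <= W, uniq (start :: y) &
      forall i, (i < size y)%N -> (gm' (st (take i y)) <= (g2 (take i y))%:E)%E].
  move=> y /mem_rem Hy; case: (HO y Hy) => H1 H2 H3 H4 H5; split => // i Hi.
  exact: le_trans (gm'_le _) (H5 i Hi).
move=> y /=; case: ifP => _; first exact: Hrem.
rewrite mem_cat => /orP[|]; first exact: Hrem.
case/mem_children => v [-> /and5P[Huv Hv Hlt Hf1' Hf2']].
have Hpre' : forall i, (i <= size x)%N ->
    (gm' (st (take i x)) <= (g2 (take i x))%:E)%E.
  move=> i; rewrite leq_eqVlt => /orP[/eqP ->|Hi].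
    by rewrite take_size gm'_x.
  exact: le_trans (gm'_le _) (Hpre i Hi).
split.
- by rewrite rcons_path Hpx Huv.
- by rewrite st_rcons.
- exact: Hf2'.
  rewrite -[(start \notin rcons x v) && uniq (rcons x v)]/(uniq (rcons (start :: x) v)) rcons_uniq Hux andbT.
  apply/negP => /in_take_state [i Hi Hl].
  have := Hpre' i Hi; rewrite /nstate Hl => Hle.
  move: Hlt; rewrite ltNge => /negP; apply.
  apply: (le_trans Hle); rewrite lee_fin.
  apply: (le_trans (g2_take i Hpx)).
  by rewrite g2_rcons lerDl Hc2.
- move=> i; rewrite size_rcons ltnS => Hi.
  by rewrite -cats1 takel_cat //; apply: Hpre'.
Qed.


Lemma P_transfer w r : w \in O -> live c w -> goodw w r ->
  (w \in O' /\ live c' w) \/ goodw x r.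
Proof.
move=> Hw Hl G.
case: (eqVneq w x) => [Ewx|Nwx]; first by right; rewrite -Ewx.
have HwO' : w \in O'.
  have Hr : w \in rem x O by apply: rem_mem.
  by case: ifP => _ //; rewrite mem_cat Hr.
case: (eqVneq (st w) (st x)) => [Est|Nst].
  case: (leP (g2 x) (g2 w)) => Hle.
    right; case: G => Hpw Hr H1 H2; case: xOI => Hpx _ _ _ _.
    have Hg1 : g1 x <= g1 w.
      by have := lexle_fst (Hmin Hw); rewrite /= /nf1 Est lerD2r.
    split => //; rewrite -?Est //.
    - by apply: le_trans H1; rewrite lerD2r.
    - by apply: le_trans H2; rewrite lerD2r.
  by left; split => //; rewrite /live /= gminE Est eqxx lte_fin.
by left; split => //; rewrite /live /= gminE (negbTE Nst).
Qed.

Lemma gpath_X1_of y p : path E start y -> gpath E setT (st y) p goal ->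
  pc c2 start (y ++ p) <= W -> gpath E X1 (st y) p goal.
Proof.
move=> Hy Hp HW; have HX := all_X1 (path_cat_goal Hy Hp) HW.
apply: gpath_restrict => //; apply/allP => w Hw; apply: (allP HX).
move: Hw; rewrite in_cons => /orP[/eqP ->|Hw].
  by rewrite -cat_cons mem_cat mem_last.
by rewrite -cat_cons mem_cat Hw orbT.
Qed.

Lemma good_f2p r : ~ Acond c' -> goodw x r -> W < f2p x.
Proof.
move=> nA' G; rewrite ltNge; apply/negP => HW; apply: nA'; apply: P_Asol => //.
have Hh1 := h1_le (good_X1path G).
apply: lexleI => /= [|Ef]; first exact: good_f1 G.
case: (G) => _ _ H1 H2.
have Eh : pc c1 (st x) r = h1 (st x).
  apply/eqP; rewrite eq_le Hh1 andbT -(lerD2l (g1 x)).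
  by rewrite -/(nf1 c1 start h1 x) Ef.
have Hub := ub2_le (good_X1path G) Eh.
by apply: le_trans H2; rewrite lerD2l.
Qed.

Lemma not_h1_eq r : ~ Acond c' -> goodw x r -> h1 (st x) != pc c1 (st x) r.
Proof.
move=> nA' G; apply/eqP => Eh.
have Hub : ub2 (st x) <= pc c2 (st x) r by apply: ub2_le (good_X1path G) _; rewrite Eh.
have := good_f2p nA' G; rewrite ltNge => /negP; apply.
case: G => _ _ H1 H2.
apply: le_trans bstar_W; apply: le_trans H2; by rewrite lerD2l.
Qed.

Lemma h1_ne_ub1 r : ~ Acond c' -> goodw x r -> h1 (st x) != ub1 (st x).
Proof.
move=> nA' G; case: xOI => Hpx HuX2 Hf2 _ _.
apply/eqP => Eh; case: (X2_p2 HuX2) => p Hp [E2 E1].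
have HW : pc c2 start (x ++ p) <= W by rewrite pcost_cat -/(nstate start x) -E2.
have Hp1 := gpath_X1_of Hpx Hp HW.
have Hub := ub2_le Hp1 (esym (etrans Eh E1)).
have := good_f2p nA' G; rewrite ltNge => /negP; apply.
apply: le_trans Hf2; rewrite /nf2 lerD2l; by rewrite E2.
Qed.




Lemma good_child v r' : goodw x (v :: r') ->
  [/\ E (st x) v, goodw (rcons x v) r' & v \in X2].
Proof.
move=> G; have HX := good_X2 G.
case: G => Hpx /gpath_cons [Huv _ Hr'] H1 H2; split => //.
- split; rewrite ?st_rcons //.
  + by rewrite rcons_path Hpx Huv.
  + by rewrite g1_rcons -addrA.
  + by rewrite g2_rcons -addrA.
- by apply: (allP HX); rewrite -cat_cons mem_cat mem_head orbT.
Qed.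

Lemma P_key : ~ Acond c' -> forall n r, (size r <= n)%N -> goodw x r ->
  exists w r', [/\ w \in O', live c' w, goodw w r' & (size r' < size r)%N].
Proof.
move=> nA'; have nA : ~ Acond c by move=> /P_Amono.
case: I => _ _ _ [H [HI1 HI2 HI3 HI4]] _.
case: xOI => Hpx HuX2 Hf2 Hux Hpre.
have Hne := h1_ne_ub1 nA'.
elim=> [|n IH] r Hn G; have Hnot := not_h1_eq nA' G;
  have Hh1 := h1_le (good_X1path G).
all: case: r Hn G Hnot Hh1 => [|v r'] Hn G Hnot Hh1.
all: try (by move: Hnot; rewrite /= eq_le Hh1 h1_ge0).
  by [].
case: (good_child G) => Huv G' Hv.
have Hf1y : ((f1 (rcons x v))%:E <= f1b')%E.
  case: (P_F1B) => t /= -> Ht; rewrite lee_fin.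
  exact: le_trans (good_f1 G') Ht.
have Hf2y : f2 (rcons x v) <= W.
  case: (G') => _ Hr _ H2; apply: le_trans bstar_W; apply: le_trans H2.
  by rewrite /nf2 lerD2l; apply: h2_le.
case: (ltP (g2 (rcons x v))%:E (gm' v)) => Hlt.
  exists (rcons x v), r'; split => //.
  - rewrite (negbTE (Hne _ G)) mem_cat; apply/orP; right.
    by apply/mem_children; exists v; split => //; rewrite Huv Hv Hlt Hf1y Hf2y.
  - by rewrite /live /= st_rcons.
have Gsh : forall r'', goodw x r'' -> (size r'' < size (v :: r'))%N ->
    exists w r3, [/\ w \in O', live c' w, goodw w r3 & (size r3 < size (v :: r'))%N].
  move=> r'' G'' Hs; case: (IH r'' _ G'') => [|w [r3 [Hw Hl Gw Hs3]]].
    by rewrite -ltnS; apply: leq_trans Hs Hn.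
  by exists w, r3; split => //; apply: ltn_trans Hs3 Hs.
case: (eqVneq v (st x)) => [Evu|Nvu].
  apply: (Gsh r') => //; case: (G') => Hpy Hr H1 H2; split => //.
  - by rewrite -Evu -(st_rcons x v).
  - apply: le_trans H1; rewrite g1_rcons st_rcons -addrA lerD2l -Evu lerDr.
    by apply: Hc1; rewrite {1}Evu.
  - apply: le_trans H2; rewrite g2_rcons st_rcons -addrA lerD2l -Evu lerDr.
    by apply: Hc2; rewrite {1}Evu.
move: Hlt; rewrite gminE (negbTE Nvu) => Hle.
case: (HI1 v) => [Hoo|[z Hz [Ez Egz]]]; first by move: Hle; rewrite /= in Hoo; rewrite Hoo.
move: Hle; rewrite /= in Egz; rewrite Egz lee_fin => Hle.
have Hfz : f1 z <= f1 (rcons x v).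
  apply: le_trans (HI3 z x Hz Hx) _.
  by apply: child_f1 => //; apply: X2_X1.
have Hg1z : g1 z <= g1 (rcons x v).
  by move: Hfz; rewrite /nf1 Ez st_rcons lerD2r.
have Gz : goodw z r'.
  case: (G') => Hpy Hr H1 H2; rewrite st_rcons in Hr H1 H2.
  split; rewrite ?Ez //.
  - exact: HI2.
  - by apply: le_trans H1; rewrite lerD2r.
  - by apply: le_trans H2; rewrite lerD2r.
case: (HI4 nA z r' Hz Gz) => w [r3 [Hw Hl Gw Hs3]].
case: (P_transfer Hw Hl Gw) => [[HwO' Hl']|Gx].
  by exists w, r3; split => //; exact: (ltn_trans Hs3 (ltnSn _)).
by apply: (Gsh r3) => //; exact: (ltn_trans Hs3 (ltnSn _)).
Qed.


Lemma P_Inv : Inv c'.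
Proof.
have HI' := I; case: HI' => HS HF HO [H [HI1 HI2 HI3 HI4]] [HB _].
case: xOI => Hpx HuX2 Hf2 Hux Hpre.
have Hkey : forall r, ~ Acond c' -> goodw x r ->
    exists w r', [/\ w \in O', live c' w, goodw w r' & (size r' < size r)%N].
  by move=> r nA' G; apply: (P_key nA' (leqnn _) G).
have HO'm : forall w, w \in O' -> f1 x <= f1 w.
  move=> w; case: ifP => _; first by move/mem_rem => Hw; exact: lexle_fst (Hmin Hw).
  rewrite mem_cat => /orP[/mem_rem Hw|]; first exact: lexle_fst (Hmin Hw).
  case/mem_children => v [-> /and5P[Huv Hv _ _ _]].
  by apply: child_f1 => //; apply: X2_X1.
split.
- exact: P_SI.
- exact: P_F1B.
- exact: P_OI.
- exists (x :: H); split.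
  + move=> v /=; rewrite gminE; case: eqP => [->|_].
      by right; exists x; rewrite ?mem_head.
    case: (HI1 v) => /= [-> |[z Hz Ez]]; first by left.
    by right; exists z; rewrite // in_cons Hz orbT.
  + by move=> z; rewrite in_cons => /orP[/eqP ->|/HI2].
  + move=> z w; rewrite in_cons => /orP[/eqP ->|Hz] Hw; first exact: HO'm.
    exact: le_trans (HI3 z x Hz Hx) (HO'm w Hw).
  + move=> nA' z r; rewrite in_cons => /orP[/eqP ->|Hz] G; first exact: Hkey.
    have nA : ~ Acond c by move=> /P_Amono.
    case: (HI4 nA z r Hz G) => w [r3 [Hw Hl Gw Hs3]].
    case: (P_transfer Hw Hl Gw) => [[HwO' Hl']|Gx]; first by exists w, r3.
    case: (Hkey r3 nA' Gx) => w' [r4 [Hw' Hl' Gw' Hs4]].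
    by exists w', r4; split => //; exact: ltn_trans Hs4 Hs3.
- split => // nA'.
  have nA : ~ Acond c by move=> /P_Amono.
  case: (HB nA) => w [r [Hw Hl Gw]].
  case: (P_transfer Hw Hl Gw) => [[HwO' Hl']|Gx]; first by exists w, r.
  case: (Hkey r nA' Gx) => w' [r4 [Hw' Hl' Gw' _]].
  by exists w', r4.
Qed.

End Proc.


Lemma inv_step (c c' : cfg) : Inv c ->
  step E c1 c2 start W X2 h1 h2 ub1 ub2 c c' -> Inv c'.
Proof.
move=> I Hs; case: Hs I => O gm f1b fs sol x.
- by move=> Hx Hmin Hlt I; exact: inv_stop I Hx Hmin Hlt.
- by move=> Hx _ _ Hle I; exact: inv_discard I Hx Hle.
- move=> f1b' fs' sol' Hx Hmin Hf1 Hg Heu I.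
  exact: (P_Inv I Hx Hmin Hf1 Hg Heu).
Qed.

Lemma reach_inv (c : cfg) : reachable E c1 c2 start W X1 X2 h1 h2 ub1 ub2 c -> Inv c.
Proof.
elim=> [|c0 c' _ I Hs]; first exact: inv_init.
exact: inv_step I Hs.
Qed.

Lemma final_A (c : cfg) : Inv c -> terminal c -> Acond c.
Proof.
case=> _ _ _ _ [HB Hh]; rewrite /terminal => /orP[/Hh //|Hnil].
apply: NNPP => nA; case: (HB nA) => w [r [Hw _ _]].
by move: Hnil Hw; case: (cOpen c).
Qed.

Definition cnt (c : cfg) : nat := count (live c) (allseq S #|S|).

Lemma count_lt (T : eqType) (a b : pred T) (s : seq T) y :
  subpred a b -> y \in s -> b y -> ~~ a y -> (count a s < count b s)%N.
Proof.
move=> Hab; elim: s => [|z s IH] //; rewrite in_cons => /orP[/eqP ->|Hy] Hb Ha /=.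
  by rewrite Hb (negbTE Ha) add0n add1n ltnS sub_count.
rewrite -addnS; apply: leq_add (IH Hy Hb Ha).
by case Haz: (a z) => //; rewrite (Hab _ Haz).
Qed.

Lemma step_measure (c c' : cfg) : Inv c ->
  step E c1 c2 start W X2 h1 h2 ub1 ub2 c c' -> ~~ chalted c' ->
  (cnt c' < cnt c)%N \/ (cnt c' <= cnt c /\ size (cOpen c') < size (cOpen c))%N.
Proof.
move=> I Hs; case: Hs I => O gm f1b fs sol x //.
- move=> Hx _ _ Hle _ _; right; split => //=.
  by rewrite size_rem // prednK // -has_predT; apply/hasP; exists x.
- move=> f1b' fs' sol' Hx Hmin Hf1 Hg Heu I _; left.
  case: (xOI I Hx) => Hpx HuX2 Hf2 Hux Hpre.
  apply: (@count_lt _ _ _ _ x).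
  + move=> y; rewrite /live /= gminE; case: eqP => [->|_] // H.
    exact: lt_trans H Hg.
  + by apply: mem_allseq; apply: ltnW; apply: uniq_size Hux.
  + exact: Hg.
  + by rewrite /live /= gminE eqxx ltxx.
Qed.


Lemma step_src (c c' : cfg) : step E c1 c2 start W X2 h1 h2 ub1 ub2 c c' -> chalted c = false.
Proof. by case. Qed.

Lemma no_infinite_run : ~ exists run : nat -> cfg,
  run 0%N = init_config start X1 ub1 /\
  forall n, step E c1 c2 start W X2 h1 h2 ub1 ub2 (run n) (run n.+1).
Proof.
case=> run [H0 Hst].
have Hr : forall n, Inv (run n).
  elim=> [|n IH]; first by rewrite H0; exact: inv_init.
  exact: inv_step IH (Hst n).
have Hm : forall n, (cnt (run n.+1) < cnt (run n))%N \/
    (cnt (run n.+1) <= cnt (run n) /\ size (cOpen (run n.+1)) < size (cOpen (run n)))%N.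
  by move=> n; apply: step_measure (Hr n) (Hst n) _; rewrite (step_src (Hst n.+1)).
have key : forall a b n, (cnt (run n) < a)%N -> (size (cOpen (run n)) < b)%N -> False.
  elim=> [|a IHa] // b; elim: b => [|b IHb] n // Ha Hb.
  case: (Hm n) => [Hlt|[Hle Hlt]].
    by apply: (IHa (size (cOpen (run n.+1))).+1 n.+1) => //; apply: leq_trans Hlt _; rewrite -ltnS.
  apply: (IHb n.+1); first exact: leq_ltn_trans Hle Ha.
  by rewrite -ltnS; apply: leq_trans Hlt Hb.
exact: (key (cnt (run 0%N)).+1 (size (cOpen (run 0%N))).+1 0%N).
Qed.

Lemma final_opt (c : cfg) : reachable E c1 c2 start W X1 X2 h1 h2 ub1 ub2 c -> terminal c ->
  exists2 x, cSol c = Some x &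
       forall q, gpath E setT (nstate start x) q goal ->
         pcost c1 (nstate start x) q = h1 (nstate start x) ->
         pcost c2 (nstate start x) q = ub2 (nstate start x) ->
         cost_optimal E c1 c2 start goal W (x ++ q).
Proof.
move=> Hr Ht; case: (final_A (reach_inv Hr) Ht) => s [Hs Hps' HsW Hlex].
exists s => // q Hq E1 E2.
have Hc1e : pc c1 start (s ++ q) = f1 s by rewrite pcost_cat -/(nstate start s) E1.
have Hc2e : pc c2 start (s ++ q) = f2p s by rewrite pcost_cat -/(nstate start s) E2.
split; first exact: path_cat_goal.
  by rewrite Hc2e.
move=> q' Hq' HW'; rewrite Hc1e Hc2e.
exact: lexle_trans Hlex (Hpsopt Hq' HW').
Qed.

End Opt.

Lemma progress (c : config R S) : terminal c \/ exists c', step E c1 c2 start W X2 h1 h2 ub1 ub2 c c'.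
Proof.
case: c => O gm f1b fs sol [] /=; first by left.
case: O => [|y O']; first by left.
have [x Hx Hmin] := exists_lexmin (fun y => (nf1 c1 start h1 y, nf2 c2 start h2 y))
   (isT : (y :: O') != [::]).
right.
case: (ltP f1b (nf1 c1 start h1 x)%:E) => [Hlt|Hle].
  by eexists; apply: step_stop Hx Hmin Hlt.
case: (leP (gm (nstate start x)) (ng2 c2 start x)%:E) => [Hd|Hp].
  by eexists; apply: step_discard Hx Hmin Hle Hd.
case Heu: (early_update c1 c2 start W h1 ub1 ub2 x f1b fs sol) => [[a b] s'].
by eexists; apply: step_process Hx Hmin Hle Hp Heu.
Qed.

Lemma main_result :
  (~ exists run : nat -> config R S,
       run 0%N = init_config start X1 ub1 /\
       forall n, step E c1 c2 start W X2 h1 h2 ub1 ub2 (run n) (run n.+1)) /\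
  (forall c, reachable E c1 c2 start W X1 X2 h1 h2 ub1 ub2 c ->
     terminal c \/ exists c', step E c1 c2 start W X2 h1 h2 ub1 ub2 c c') /\
  (forall c, reachable E c1 c2 start W X1 X2 h1 h2 ub1 ub2 c -> terminal c ->
     exists2 x, cSol c = Some x &
       forall q, gpath E setT (nstate start x) q goal ->
         pcost c1 (nstate start x) q = h1 (nstate start x) ->
         pcost c2 (nstate start x) q = ub2 (nstate start x) ->
         cost_optimal E c1 c2 start goal W (x ++ q)).
Proof.
case: opt_exists => ps [Hps HpsW Hopt].
split; first exact: (no_infinite_run Hps HpsW Hopt).
split; first by move=> c _; exact: progress.
by move=> c; exact: (final_opt Hps HpsW Hopt).
Qed.

End Main.

Unset Implicit Arguments.
Theorem theorem3 (R : realDomainType) (S : finType) (E : rel S)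
    (c1 c2 : S -> S -> R) (start goal : S) (W : R)
    (* non-negative edge costs *)
    (Hc1 : forall u v, E u v -> 0 <= c1 u v)
    (Hc2 : forall u v, E u v -> 0 <= c2 u v)
    (* the instance has a solution path *)
    (Hfeas : exists p, gpath E setT start p goal /\ pcost c2 start p <= W)
    (* heuristics of the two backward searches (they estimate the cost from
       start): admissible and consistent *)
    (hh2 hh1 : S -> R)
    (Hhh2_adm : forall u p, gpath E setT start p u -> hh2 u <= pcost c2 start p)
    (Hhh2_cons : forall u v, E u v -> hh2 v <= hh2 u + c2 u v)
    (* results of the initialisation phase *)
    (X1 X2 : {set S}) (h1 h2 ub1 ub2 : S -> R)
    (Hhh1_adm : forall u p, gpath E X1 start p u -> hh1 u <= pcost c1 start p)
    (Hhh1_cons : forall u v, u \in X1 -> v \in X1 -> E u v ->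
                   hh1 v <= hh1 u + c1 u v)
    (Hinit : init_outcome E c1 c2 start goal W hh2 hh1 X1 X2 h1 h2 ub1 ub2) :
  (* WC-A* terminates: no infinite run, and it never gets stuck *)
  (~ exists run : nat -> config R S,
       run 0%N = init_config start X1 ub1 /\
       forall n, step E c1 c2 start W X2 h1 h2 ub1 ub2 (run n) (run n.+1)) /\
  (forall c, reachable E c1 c2 start W X1 X2 h1 h2 ub1 ub2 c ->
     terminal c \/ exists c', step E c1 c2 start W X2 h1 h2 ub1 ub2 c c') /\
  (* when it terminates, Sol yields a cost-optimal solution path *)
  (forall c, reachable E c1 c2 start W X1 X2 h1 h2 ub1 ub2 c -> terminal c ->
     exists2 x, cSol c = Some x &
       forall q, gpath E setT (nstate start x) q goal ->
         pcost c1 (nstate start x) q = h1 (nstate start x) ->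
         pcost c2 (nstate start x) q = ub2 (nstate start x) ->
         cost_optimal E c1 c2 start goal W (x ++ q)).
Proof. exact: (@main_result R S E c1 c2 start goal W Hc1 Hc2 Hfeas hh2 hh1 Hhh2_adm X1 X2 h1 h2 ub1 ub2 Hhh1_adm Hinit). Qed.
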